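(* Let $\theta:\mathbb{R}^m\to(-\infty,\infty]$ be proper, convex and piecewise linear, let $\bar z\in\operatorname{dom}\partial\theta$, and let $S(\bar z)$ be the linear subspace parallel to the affine hull of $\partial\theta(\bar z)$. Then for every $\bar v\in\partial\theta(\bar z)$, $$\partial^2\theta(\bar z,\bar v)(0)=S(\bar z).$$
   Context: $\theta$ is (convex) piecewise linear if it is convex, proper, and its domain is a union of finitely many polyhedral sets on each of which $\theta$ is affine (equivalently, its epigraph is polyhedral). For convex $\theta$, $\partial\theta$ is the convex-analysis subdifferential. For $\Omega$ and $\bar x\in\Omega$: $\hat N(\bar x;\Omega)=\{v:\limsup_{x\to\bar x,\,x\in\Omega}\langle v,x-\bar x\rangle/\|x-\bar x\|\le0\}$, and the limiting normal cone $N(\bar x;\Omega)$ = limits of $v_k\in\hat N(x_k;\Omega)$, $x_k\to\bar x$ in $\Omega$. Coderivative: $D^*F(\bar x,\bar y)(v)=\{u:(u,-v)\in N((\bar x,\bar y);\operatorname{gph}F)\}$. Second-order subdifferential: $\partial^2\theta(\bar z,\bar v)(u):=D^*(\partial\theta)(\bar z,\bar v)(u)$. *)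

(* Defs.v *)
From mathcomp Require Import ssreflect ssrfun ssrbool eqtype ssrnat seq fintype bigop.
From Stdlib Require Import Reals List.
Open Scope R_scope.

Definition vec (m : nat) := 'I_m -> R.

Definition vzero {m} : vec m := fun _ => 0.
Definition vadd {m} (x y : vec m) : vec m := fun i => x i + y i.
Definition vsub {m} (x y : vec m) : vec m := fun i => x i - y i.
Definition vopp {m} (x : vec m) : vec m := fun i => - x i.
Definition vscale {m} (t : R) (x : vec m) : vec m := fun i => t * x i.

Definition dot {m} (x y : vec m) : R := \big[Rplus/0]_(i < m) (x i * y i).
Definition vnorm {m} (x : vec m) : R := sqrt (dot x x).

Definition pdot {m} (p q : vec m * vec m) : R := dot (fst p) (fst q) + dot (snd p) (snd q).
Definition psub {m} (p q : vec m * vec m) : vec m * vec m :=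
  (vsub (fst p) (fst q), vsub (snd p) (snd q)).
Definition pnorm {m} (p : vec m * vec m) : R := sqrt (pdot p p).

(* Extended-real-valued functions R^m -> (-oo, +oo]: None encodes +oo. *)
Definition efun (m : nat) := vec m -> option R.

Definition edom {m} (th : efun m) (x : vec m) : Prop := exists a, th x = Some a.

Definition proper_fun {m} (th : efun m) : Prop := exists x, edom th x.

Definition convex_fun {m} (th : efun m) : Prop :=
  forall x y a b t, th x = Some a -> th y = Some b -> 0 <= t <= 1 ->
    exists c, th (vadd (vscale t x) (vscale (1 - t) y)) = Some c /\
              c <= t * a + (1 - t) * b.

Definition polyhedron {m} (H : list (vec m * R)) (x : vec m) : Prop :=
  forall h, In h H -> dot (fst h) x <= snd h.

Definition piecewise_linear {m} (th : efun m) : Prop :=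
  convex_fun th /\ proper_fun th /\
  exists pieces : list (list (vec m * R) * (vec m * R)),
    (forall x, edom th x <-> exists P, In P pieces /\ polyhedron (fst P) x) /\
    (forall P x, In P pieces -> polyhedron (fst P) x ->
        th x = Some (dot (fst (snd P)) x + snd (snd P))).

Definition subdiff {m} (th : efun m) (z v : vec m) : Prop :=
  exists a, th z = Some a /\
    forall x b, th x = Some b -> a + dot v (vsub x z) <= b.

Definition aff_hull {m} (C : vec m -> Prop) (x : vec m) : Prop :=
  exists l : list (R * vec m),
    (forall p, In p l -> C (snd p)) /\
    fold_right (fun p s => fst p + s) 0 l = 1 /\
    x = fold_right (fun p s => vadd (vscale (fst p) (snd p)) s) vzero l.

(* The linear subspace parallel to aff C (for C nonempty): aff C - aff C. *)
Definition parallel_subspace {m} (C : vec m -> Prop) (x : vec m) : Prop :=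
  exists a b, aff_hull C a /\ aff_hull C b /\ x = vsub a b.

Definition S_sub {m} (th : efun m) (z : vec m) : vec m -> Prop :=
  parallel_subspace (subdiff th z).

(* Regular (Frechet) normal cone to Om at xb (in R^m x R^m), with the limsup
   written out:  limsup_{x -> xb, x in Om} <v, x - xb>/||x - xb|| <= 0. *)
Definition reg_normal {m} (Om : vec m * vec m -> Prop) (xb v : vec m * vec m) : Prop :=
  Om xb /\
  forall eps, 0 < eps -> exists delta, 0 < delta /\
    forall x, Om x -> 0 < pnorm (psub x xb) < delta ->
      pdot v (psub x xb) <= eps * pnorm (psub x xb).

Definition pconv {m} (s : nat -> vec m * vec m) (l : vec m * vec m) : Prop :=
  forall eps, 0 < eps -> exists N, forall k, (N <= k)%nat -> pnorm (psub (s k) l) < eps.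

Definition lim_normal {m} (Om : vec m * vec m -> Prop) (xb v : vec m * vec m) : Prop :=
  Om xb /\
  exists (xs vs : nat -> vec m * vec m),
    (forall k, Om (xs k)) /\ pconv xs xb /\
    (forall k, reg_normal Om (xs k) (vs k)) /\ pconv vs v.

Definition gph {m} (F : vec m -> vec m -> Prop) (p : vec m * vec m) : Prop :=
  F (fst p) (snd p).

Definition coderiv {m} (F : vec m -> vec m -> Prop) (xb yb v u : vec m) : Prop :=
  lim_normal (gph F) (xb, yb) (u, vopp v).

Definition subdiff2 {m} (th : efun m) (zb vb u w : vec m) : Prop :=
  coderiv (subdiff th) zb vb u w.

(* Main.v *)
From HB Require Import structures.
From mathcomp Require Import ssreflect ssrfun ssrbool eqtype ssrnat seq fintype bigop.
From mathcomp Require Import ssralg matrix mxalgebra.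
From mathcomp Require Import Rstruct.
From Stdlib Require Import Reals List Lra Classical FunctionalExtensionality ClassicalEpsilon.
Require Import Defs.
Open Scope R_scope.
Set Implicit Arguments. Unset Strict Implicit.
Section G.
Variable T : finType.
Implicit Types x y z a b u : T -> R.
Definition gdot x y := \big[Rplus/0]_(i : T) (x i * y i).

Lemma gdot_ext x y x' y' : (forall i, x i = x' i) -> (forall i, y i = y' i) -> gdot x y = gdot x' y'.
Proof. move=> H1 H2; rewrite /gdot; apply: eq_bigr => i _; by rewrite H1 H2. Qed.
Lemma gdot_addl x y z : gdot (fun i => x i + y i) z = gdot x z + gdot y z.
Proof. rewrite /gdot -big_split /=. apply: eq_bigr => i _; ring. Qed.
Lemma gdot_addr x y z : gdot z (fun i => x i + y i) = gdot z x + gdot z y.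
Proof. rewrite /gdot -big_split /=. apply: eq_bigr => i _; ring. Qed.
Lemma gdot_scalel (t:R) x z : gdot (fun i => t * x i) z = t * gdot x z.
Proof. rewrite /gdot big_distrr /=. apply: eq_bigr => i _; ring. Qed.
Lemma gdot_scaler (t:R) x z : gdot z (fun i => t * x i) = t * gdot z x.
Proof. rewrite /gdot big_distrr /=. apply: eq_bigr => i _; ring. Qed.
Lemma gdot_sym x y : gdot x y = gdot y x.
Proof. rewrite /gdot; apply: eq_bigr => i _; ring. Qed.
Lemma gdot_subl x y z : gdot (fun i => x i - y i) z = gdot x z - gdot y z.
Proof. rewrite (@gdot_ext _ _ (fun i => x i + (-1) * y i) z) ?gdot_addl ?gdot_scalel; [ring| |]=> i /=; ring. Qed.
Lemma gdot_subr x y z : gdot z (fun i => x i - y i) = gdot z x - gdot z y.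
Proof. by rewrite gdot_sym gdot_subl !(gdot_sym z). Qed.
Lemma gdot_oppl x z : gdot (fun i => - x i) z = - gdot x z.
Proof. rewrite (@gdot_ext _ _ (fun i => (-1) * x i) z) ?gdot_scalel; [ring| |]=> i /=; ring. Qed.
Lemma gdot_oppr x z : gdot z (fun i => - x i) = - gdot z x.
Proof. by rewrite gdot_sym gdot_oppl gdot_sym. Qed.
Lemma gdot0l z : gdot (fun _ => 0) z = 0.
Proof. rewrite /gdot big1 // => i _; ring. Qed.
Lemma gdot0r z : gdot z (fun _ => 0) = 0.
Proof. rewrite /gdot big1 // => i _; ring. Qed.
Lemma gdot_sum0 (F : T -> R) : (forall i, 0 <= F i) -> 0 <= \big[Rplus/0]_(i : T) F i.
Proof. move=> H; elim/big_rec: _ => [|i s _ Hs]; [lra| by move: (H i); lra]. Qed.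
Lemma gdot_nonneg x : 0 <= gdot x x.
Proof. apply: gdot_sum0 => i; nra. Qed.
Lemma gdot_pos x i : x i <> 0 -> 0 < gdot x x.
Proof.
move=> Hi; rewrite /gdot (bigD1 i) //=.
have := @gdot_sum0 (fun j => if j != i then x j * x j else 0).
rewrite -big_mkcond /= => H. have : 0 <= \big[Rplus/0]_(j | j != i) (x j * x j) by apply: H => j; case: (j != i); nra.
have : 0 < x i * x i by nra. lra.
Qed.
Lemma gdot_amgm x y : 2 * gdot x y <= gdot x x + gdot y y.
Proof.
have := gdot_nonneg (fun i => x i - y i).
rewrite gdot_subl !gdot_subr (gdot_sym y x). lra.
Qed.
Lemma gdot_small a eps : 0 < eps -> exists rho, 0 < rho /\ forall e, gdot e e < rho -> Rabs (gdot a e) < eps.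
Proof.
move=> He. have HA := gdot_nonneg a. set A := gdot a a in HA *.
set t := eps / (A + 1).
have Ht : 0 < t by rewrite /t; apply: Rdiv_lt_0_compat; lra.
have HtA : t * A < eps.
  have : t * (A + 1) = eps by rewrite /t; field; lra.
  lra.
exists (t * eps); split; first by apply: Rmult_lt_0_compat.
move=> e He2. have Hn1 := gdot_nonneg (fun i => t * a i - e i).
have Hn2 := gdot_nonneg (fun i => t * a i + e i).
rewrite gdot_subl !gdot_subr !gdot_scalel !gdot_scaler (gdot_sym e a) in Hn1.
rewrite gdot_addl !gdot_addr !gdot_scalel !gdot_scaler (gdot_sym e a) in Hn2.
rewrite -/A in Hn1 Hn2.
have H3 : t * t * A <= t * eps by nra.
apply Rabs_def1; nra.
Qed.

Fixpoint gcone (G : list (T -> R)) (b : T -> R) : Prop :=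
  match G with
  | nil => forall i, b i = 0
  | g :: G' => exists mu, 0 <= mu /\ gcone G' (fun i => b i - mu * g i)
  end.

Lemma gcone_ext G b b' : (forall i, b i = b' i) -> gcone G b -> gcone G b'.
Proof.
elim: G b b' => [|g G IH] b b' /= E; first by move=> H i; rewrite -E.
case=> mu [Hmu H]; exists mu; split => //; apply: IH H => i; by rewrite E.
Qed.

Lemma gcone_nonneg G b y : (forall g, In g G -> 0 <= gdot y g) -> gcone G b -> 0 <= gdot y b.
Proof.
elim: G b => [|g G IH] b /= Hy.
  move=> H; rewrite (@gdot_ext y b y (fun _ => 0)) // gdot0r; lra.
case=> mu [Hmu H].
have := IH _ (fun g' Hg' => Hy g' (or_intror Hg')) H.
rewrite gdot_subr gdot_scaler. have := Hy g (or_introl erefl). nra.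
Qed.

Lemma gcone0 G : gcone G (fun _ => 0).
Proof. elim: G => [|g G IH] //=; exists 0; split; [lra|]. apply: gcone_ext IH => i; ring. Qed.

Lemma gcone_add G b g mu : In g G -> 0 <= mu -> gcone G b -> gcone G (fun i => b i + mu * g i).
Proof.
elim: G b => [|g' G IH] b //= [E|Hin] Hmu.
- subst g'. case=> mu' [Hmu' H]. exists (mu + mu'); split; first lra.
  apply: gcone_ext H => i; ring.
- case=> mu' [Hmu' H]. exists mu'; split => //.
  have := IH _ Hin Hmu H. apply: gcone_ext => i; ring.
Qed.

Section Proj.
Variables (y a : T -> R).
Definition proj u : T -> R := fun i => u i - (gdot y u / gdot y a) * a i.
Lemma gcone_map G u : gcone (map proj G) u -> exists r, gcone G r /\ forall i, u i = proj r i.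
Proof.
elim: G u => [|g G IH] u /=.
  move=> H; exists (fun _ => 0); split => // i; rewrite /proj gdot0r H; rewrite /Rdiv; ring.
case=> mu [Hmu H]. case: (IH _ H) => r' [Hr' Er'].
exists (fun i => r' i + mu * g i); split.
  exists mu; split => //; apply: gcone_ext Hr' => i; ring.
move=> i. have := Er' i. rewrite /proj gdot_addr gdot_scaler /Rdiv => E. lra.
Qed.
End Proj.

Theorem farkas : forall G b, ~ gcone G b ->
  exists y, (forall g, In g G -> 0 <= gdot y g) /\ gdot y b < 0.
Proof.
suff H : forall n G b, length G = n -> ~ gcone G b ->
  exists y, (forall g, In g G -> 0 <= gdot y g) /\ gdot y b < 0.
  by move=> G b; apply: (H _ G b erefl).
elim=> [|n IH] [|a G] b //= Hlen Hnc.
- have [i Hi] : exists i, b i <> 0.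
    apply: NNPP => Hn; apply: Hnc => i; apply: NNPP => Hbi; apply: Hn; by exists i.
  exists (fun i => - b i); split => //. rewrite gdot_oppl. have := gdot_pos Hi; lra.
- case: Hlen => Hlen.
  have Hnc' : ~ gcone G b.
    move=> Hc; apply: Hnc; exists 0; split; first lra. apply: gcone_ext Hc => i; ring.
  case: (IH G b Hlen Hnc') => y [Hy Hyb].
  case: (Rle_lt_dec 0 (gdot y a)) => Hya.
    exists y; split => // g [<-|Hg] //; by apply: Hy.
  have Hnc2 : ~ gcone (map (proj y a) G) (proj y a b).
    move=> Hc. case: (gcone_map Hc) => r [Hr Er]. apply: Hnc.
    have Hyr := gcone_nonneg Hy Hr.
    exists ((gdot y b - gdot y r) / gdot y a); split.
      apply: Rlt_le. apply: Rdiv_neg_neg; lra.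
    apply: gcone_ext Hr => i. have := Er i. rewrite /proj /Rdiv => E.
    have -> : (gdot y b - gdot y r) * / gdot y a * a i = gdot y b * / gdot y a * a i - gdot y r * / gdot y a * a i by ring.
    lra.
  have Hlen2 : length (map (proj y a) G) = n by rewrite length_map.
  case: (IH _ _ Hlen2 Hnc2) => y' [Hy' Hy'b].
  set k := gdot y' a / gdot y a.
  have key : forall u, gdot (fun i => y' i - k * y i) u = gdot y' (proj y a u).
    move=> u. rewrite gdot_subl gdot_scalel /proj gdot_subr gdot_scaler /k /Rdiv.
    rewrite (gdot_sym y' a). ring.
  exists (fun i => y' i - k * y i); split.
    move=> g [<-|Hg].
      rewrite key. rewrite (@gdot_ext _ _ y' (fun _ => 0)) ?gdot0r; [lra|done|].
      move=> i; rewrite /proj /Rdiv; field; lra.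
    rewrite key; apply: Hy'; by apply: in_map.
  by rewrite key.
Qed.
End G.
Section FD.
Variable m : nat.
Definition mxD (D : list (vec m)) : 'M[R]_(size D, m) := \matrix_(k < size D, i < m) (seq.nth vzero D k) i.

Lemma rank_bound (D : list (vec m)) : leq (\rank (mxD D)) m.
Proof. exact: rank_leq_col. Qed.

Lemma sub_cons u D : (mxD D <= mxD (u :: D))%MS.
Proof.
apply/row_subP => k. apply/submxP. exists (delta_mx ord0 (lift ord0 k)).
apply/rowP => i. rewrite !mxE. rewrite (bigD1 (lift ord0 k)) //= !mxE eqxx /=.
rewrite big1 ?GRing.addr0 ?GRing.mul1r //.
move=> j /negbTE Hj. rewrite !mxE eq_sym Hj /= GRing.mul0r //.
Qed.

Lemma in_In (T : eqType) (x : T) (s : list T) : x \in s -> In x s.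
Proof. elim: s => //= a s IH; rewrite seq.in_cons => /orP [/eqP ->|H]; [by left|right; exact: IH]. Qed.

Lemma nth_In' (T : Type) (x0 : T) (s : list T) k : leq k.+1 (size s) -> In (seq.nth x0 s k) s.
Proof. elim: s k => [|a s IH] [|k] //= H; [by left|right; exact: IH]. Qed.

Lemma exch_sum n (y : vec m) (x : 'I_n -> R) (M : 'I_n -> 'I_m -> R) :
  \big[Rplus/0]_(i < m) (y i * \big[Rplus/0]_(k < n) (x k * M k i)) =
  \big[Rplus/0]_(k < n) (x k * \big[Rplus/0]_(i < m) (y i * M k i)).
Proof.
rewrite (eq_bigr (fun i => \big[Rplus/0]_(k < n) (y i * (x k * M k i)))); last first.
  by move=> i _; rewrite big_distrr.
rewrite exchange_big /=. apply: eq_bigr => k _. rewrite big_distrr /=.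
apply: eq_bigr => i _. ring.
Qed.

Lemma FD (X : vec m -> Prop) : exists D : list (vec m), (forall d, In d D -> X d) /\
  forall y, (forall d, In d D -> dot y d = 0) -> forall u, X u -> dot y u = 0.
Proof.
have [D [HD Hmax]] : exists D : list (vec m), (forall d, In d D -> X d) /\
   forall D', (forall d, In d D' -> X d) -> leq (\rank (mxD D')) (\rank (mxD D)).
  apply: NNPP => Hn.
  have Hstep : forall D, (forall d, In d D -> X d) -> exists D', (forall d, In d D' -> X d) /\
      leq (\rank (mxD D)).+1 (\rank (mxD D')).
    move=> D HD. apply: NNPP => Hn2. apply: Hn. exists D; split => // D' HD'.
    rewrite leqNgt; apply/negP => Hlt. apply: Hn2. by exists D'.
  have Hk : forall k, exists D, (forall d, In d D -> X d) /\ leq k (\rank (mxD D)).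
    elim=> [|k [D0 [HD0 Hk]]]; first by exists nil.
    case: (Hstep D0 HD0) => D' [HD' Hlt]. exists D'; split => //. exact: leq_ltn_trans Hk Hlt.
  case: (Hk m.+1) => D0 [_ H]. have := rank_bound D0. by rewrite leqNgt H.
exists D; split => // y Hy u Hu.
have Hu' : forall d, In d (u :: D) -> X d by move=> d [<-|Hd] //; apply: HD.
have Hle := Hmax _ Hu'.
have Hsub : (mxD (u :: D) <= mxD D)%MS.
  have := mxrank_leqif_sup (sub_cons u D). case=> _ <-. by rewrite eqn_leq Hle mxrankS // sub_cons.
have : (row ord0 (mxD (u :: D)) <= mxD D)%MS := submx_trans (row_sub _ _) Hsub.
case/submxP => x Ex.
have Eu : forall i, u i = \big[Rplus/0]_(k < size D) (x ord0 k * seq.nth vzero D k i).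
  move=> i. have := congr1 (fun M : 'M[R]_(1,m) => M ord0 i) Ex. rewrite !mxE /=. move=> ->.
  apply: eq_bigr => k _. by rewrite !mxE.
rewrite /dot (eq_bigr (fun i => y i * \big[Rplus/0]_(k < size D) (x ord0 k * seq.nth vzero D k i))); last first.
  by move=> i _; rewrite Eu.
rewrite exch_sum big1 // => k _.
have : dot y (seq.nth vzero D k) = 0. apply: Hy. apply: nth_In'. exact: ltn_ord.
rewrite /dot => ->. ring.
Qed.
End FD.

Lemma sum_option (T : finType) (F : option T -> R) :
  \big[Rplus/0]_(w : option T) F w = F None + \big[Rplus/0]_(x : T) F (Some x).
Proof. rewrite /index_enum !unlock /= /reducebig /= foldr_map !unlock. reflexivity. Qed.

Lemma sum_delta (T : finType) (i0 : T) (f : T -> R) :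
  \big[Rplus/0]_(i : T) (if i == i0 then f i else 0) = f i0.
Proof. rewrite (bigD1 i0) //= eqxx big1 => [|i /negbTE -> //]; ring. Qed.

Lemma sum_const_ord K (c : R) : \big[Rplus/0]_(j < K) c = INR K * c.
Proof.
rewrite big_const_ord. elim: K => [|K IH]; first by rewrite /=; ring.
rewrite iterS IH S_INR. ring.
Qed.

Lemma gcone_ind (T : finType) (Q : (T -> R) -> Prop) (G : list (T -> R)) :
  (forall t, (forall i, t i = 0) -> Q t) ->
  (forall t g mu, In g G -> 0 <= mu -> Q (fun i => t i - mu * g i) -> Q t) ->
  forall t, gcone G t -> Q t.
Proof.
elim: G => [|g G IH] H0 Hs t /=; first exact: H0.
case=> mu [Hmu Hc]. apply: (Hs t g mu (or_introl erefl) Hmu).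
apply: IH => //. move=> t' g' mu' Hg'; apply: Hs; by right.
Qed.

Lemma In_nth' (T : Type) (x0 : T) (s : list T) x : In x s ->
  exists k, leq k.+1 (size s) /\ seq.nth x0 s k = x.
Proof.
elim: s => [|a s IH] //= [->|H]; first by exists O.
case: (IH H) => k [Hk E]. by exists k.+1.
Qed.


Section VecLemmas.
Variable m : nat.
Implicit Types x y z a e : vec m.
Lemma dot_addr a x y : dot a (vadd x y) = dot a x + dot a y. Proof. exact: gdot_addr. Qed.
Lemma dot_addl a x y : dot (vadd x y) a = dot x a + dot y a. Proof. exact: gdot_addl. Qed.
Lemma dot_subr a x y : dot a (vsub x y) = dot a x - dot a y. Proof. exact: gdot_subr. Qed.
Lemma dot_subl a x y : dot (vsub x y) a = dot x a - dot y a. Proof. exact: gdot_subl. Qed.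
Lemma dot_scaler a t x : dot a (vscale t x) = t * dot a x. Proof. exact: gdot_scaler. Qed.
Lemma dot_scalel a t x : dot (vscale t x) a = t * dot x a. Proof. exact: gdot_scalel. Qed.
Lemma dot_oppr a x : dot a (vopp x) = - dot a x. Proof. exact: gdot_oppr. Qed.
Lemma dot_oppl a x : dot (vopp x) a = - dot x a. Proof. exact: gdot_oppl. Qed.
Lemma dot_sym x y : dot x y = dot y x. Proof. exact: gdot_sym. Qed.
Lemma dot_ext x y x' y' : (forall i, x i = x' i) -> (forall i, y i = y' i) -> dot x y = dot x' y'.
Proof. exact: gdot_ext. Qed.
Lemma dot0r x : dot x vzero = 0. Proof. exact: gdot0r. Qed.
Lemma dot0l x : dot vzero x = 0. Proof. exact: gdot0l. Qed.
Lemma dot_nonneg x : 0 <= dot x x. Proof. exact: gdot_nonneg. Qed.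
Lemma dot_amgm x y : 2 * dot x y <= dot x x + dot y y. Proof. exact: gdot_amgm. Qed.
Lemma dot_small a eps : 0 < eps -> exists rho, 0 < rho /\ forall e, dot e e < rho -> Rabs (dot a e) < eps.
Proof. exact: gdot_small. Qed.
End VecLemmas.

Lemma shrink D rho : 0 <= D -> 0 < rho ->
  0 < rho / (D + rho) /\ rho / (D + rho) <= 1 /\ rho / (D + rho) * (rho / (D + rho)) * D < rho.
Proof.
move=> HD Hr. set s := rho / (D + rho).
have Hs : s * (D + rho) = rho by rewrite /s; field; lra.
have Hs0 : 0 < s by rewrite /s; apply: Rdiv_lt_0_compat; lra.
have Hs1 : s <= 1 by nra.
split => //; split => //. have : s * D < rho by nra. nra.
Qed.

Section Local.
Variables (m : nat) (th : efun m) (zb : vec m) (a0 : R).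
Variable pieces : list (list (vec m * R) * (vec m * R)).
Hypothesis hconv : convex_fun th.
Hypothesis hdom : forall x, edom th x <-> exists P, In P pieces /\ polyhedron (fst P) x.
Hypothesis haff : forall P x, In P pieces -> polyhedron (fst P) x ->
        th x = Some (dot (fst (snd P)) x + snd (snd P)).
Hypothesis hz : th zb = Some a0.

Lemma radius_list (L : list (vec m * R)) : exists rho, 0 < rho /\ forall e, dot e e < rho ->
  forall h, In h L -> (dot (fst h) zb < snd h -> dot (fst h) (vadd zb e) < snd h) /\
                      (snd h < dot (fst h) zb -> snd h < dot (fst h) (vadd zb e)).
Proof.
elim: L => [|h L [r1 [Hr1 IH]]]; first by exists 1; split => //; lra.
case: (Req_dec (dot (fst h) zb) (snd h)) => Heq.
  exists r1; split => // e He h' [<-|Hh']; last by apply: IH.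
  rewrite Heq; lra.
have Heps : 0 < Rabs (dot (fst h) zb - snd h) by apply: Rabs_pos_lt; lra.
case: (dot_small (fst h) Heps) => r2 [Hr2 H2].
exists (Rmin r1 r2); split; first by apply: Rmin_pos.
move=> e He h' [<-|Hh']; last by apply: IH => //; apply: Rlt_le_trans He (Rmin_l _ _).
have := H2 e (Rlt_le_trans _ _ _ He (Rmin_r _ _)). rewrite dot_addr.
move: Heps. case: (Rlt_le_dec (dot (fst h) zb) (snd h)) => Hc.
  rewrite Rabs_left; last lra. move=> _ Ha. have := Rabs_def2 _ _ Ha. lra.
rewrite Rabs_right; last lra. move=> _ Ha. have := Rabs_def2 _ _ Ha. lra.
Qed.

Definition act (P : list (vec m * R) * (vec m * R)) := polyhedron (fst P) zb.
Definition Kc (P : list (vec m * R) * (vec m * R)) (d : vec m) :=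
  forall h, In h (fst P) -> dot (fst h) zb = snd h -> dot (fst h) d <= 0.

Lemma Kc_scale P t d : 0 <= t -> Kc P d -> Kc P (vscale t d).
Proof. move=> Ht H h Hh Heq. rewrite dot_scaler. have := H h Hh Heq. nra. Qed.

Lemma local_struct : exists rho, 0 < rho /\
  (forall e P, dot e e < rho -> In P pieces -> polyhedron (fst P) (vadd zb e) -> act P /\ Kc P e) /\
  (forall e P, dot e e < rho -> In P pieces -> act P -> Kc P e -> polyhedron (fst P) (vadd zb e)).
Proof.
case: (radius_list (flat_map fst pieces)) => rho [Hr H].
exists rho; split => //; split.
- move=> e P He HP Hpol. split.
    move=> h Hh. apply: Rnot_lt_le => Hlt.
    have Hin : In h (flat_map fst pieces) by apply/in_flat_map; exists P.
    have := (proj2 (H e He h Hin)) Hlt. have := Hpol h Hh. lra.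
  move=> h Hh Heq. have := Hpol h Hh. rewrite dot_addr. lra.
- move=> e P He HP Hact HK h Hh.
  have Hin : In h (flat_map fst pieces) by apply/in_flat_map; exists P.
  case: (Req_dec (dot (fst h) zb) (snd h)) => Heq.
    rewrite dot_addr. have := HK h Hh Heq. lra.
  have Hlt : dot (fst h) zb < snd h by have := Hact h Hh; lra.
  have := (proj1 (H e He h Hin)) Hlt. lra.
Qed.

Lemma piece_value P e : In P pieces -> act P -> polyhedron (fst P) (vadd zb e) ->
  th (vadd zb e) = Some (a0 + dot (fst (snd P)) e).
Proof.
move=> HP Ha Hpol. rewrite (haff HP Hpol). have := haff HP Ha. rewrite hz => -[->].
rewrite dot_addr. congr Some. ring.
Qed.

Lemma vadd_sub x : vadd zb (vsub x zb) = x.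
Proof. apply: functional_extensionality => i. rewrite /vadd /vsub. ring. Qed.

Lemma local_global c rho : 0 < rho ->
  (forall e b, dot e e < rho -> th (vadd zb e) = Some b -> a0 + dot c e <= b) -> subdiff th zb c.
Proof.
move=> Hr H. exists a0; split => // x b Hx.
set e := vsub x zb. apply: Rnot_lt_le => Hlt.
have HD := dot_nonneg e.
case: (shrink HD Hr) => Hs0 [Hs1 Hs2]. set s := rho / (dot e e + rho) in Hs0 Hs1 Hs2.
case: (hconv Hx hz (conj (Rlt_le _ _ Hs0) Hs1)) => [ct [Hct Hle]].
have E : vadd (vscale s x) (vscale (1 - s) zb) = vadd zb (vscale s e).
  apply: functional_extensionality => i. rewrite /vadd /vscale /e /vsub. ring.
rewrite E in Hct.
have Hd : dot (vscale s e) (vscale s e) < rho by rewrite dot_scalel dot_scaler; lra.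
have := H _ _ Hd Hct. rewrite dot_scaler. nra.
Qed.

Lemma crit c : (forall P, In P pieces -> act P -> forall d, Kc P d -> dot c d <= dot (fst (snd P)) d) ->
  subdiff th zb c.
Proof.
move=> H. case: local_struct => rho [Hr [H1 H2]].
apply: (local_global Hr) => e b He Hb.
have : edom th (vadd zb e) by exists b.
case/hdom => P [HP Hpol]. case: (H1 e P He HP Hpol) => Ha HK.
rewrite (piece_value HP Ha Hpol) in Hb. case: Hb => <-.
have := H P HP Ha e HK. lra.
Qed.

Lemma sub_prop v : subdiff th zb v -> forall P, In P pieces -> act P -> forall d, Kc P d ->
  dot v d <= dot (fst (snd P)) d.
Proof.
case=> a [Ha Hv] P HP Hact d HK. rewrite hz in Ha. case: Ha => Ha; subst a.
case: local_struct => rho [Hr [H1 H2]].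
have HD := dot_nonneg d.
case: (shrink HD Hr) => Hs0 [Hs1 Hs2]. set s := rho / (dot d d + rho) in Hs0 Hs1 Hs2.
have Hd : dot (vscale s d) (vscale s d) < rho by rewrite dot_scalel dot_scaler; lra.
have Hpol := H2 _ _ Hd HP Hact (Kc_scale (Rlt_le _ _ Hs0) HK).
have := Hv _ _ (piece_value HP Hact Hpol).
rewrite (@dot_ext _ v (vsub (vadd zb (vscale s d)) zb) v (vscale s d)) //; last first.
  move=> i; rewrite /vsub /vadd /vscale; ring.
rewrite !dot_scaler. move=> H. apply: (Rmult_le_reg_l s) => //. lra.
Qed.

End Local.


Section Jensen.
Variables (m : nat) (th : efun m).
Hypothesis hconv : convex_fun th.

Lemma sum_nonneg_seq (I : Type) (r : list I) (w : I -> R) :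
  (forall j, In j r -> 0 <= w j) -> 0 <= \big[Rplus/0]_(j <- r) w j.
Proof.
elim: r => [|j r IH] H; rewrite ?big_nil ?big_cons; first lra.
have := H j (or_introl erefl). have := IH (fun k Hk => H k (or_intror Hk)). lra.
Qed.

Lemma sum_zero_all (I : Type) (r : list I) (w : I -> R) :
  (forall j, In j r -> 0 <= w j) -> \big[Rplus/0]_(j <- r) w j = 0 -> forall j, In j r -> w j = 0.
Proof.
elim: r => [|j r IH] H //; rewrite big_cons => Hs k [<-|Hk].
  have := sum_nonneg_seq (fun k Hk => H k (or_intror Hk)). have := H j (or_introl erefl). lra.
apply: IH => //. move=> l Hl; apply: H; by right.
have := sum_nonneg_seq (fun k Hk => H k (or_intror Hk)). have := H j (or_introl erefl). lra.
Qed.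

Lemma sum_zero_mul (I : Type) (r : list I) (w f : I -> R) :
  (forall j, In j r -> w j = 0) -> \big[Rplus/0]_(j <- r) (w j * f j) = 0.
Proof.
elim: r => [|j r IH] H; rewrite ?big_nil ?big_cons //.
rewrite H ?IH; [ring| |by left]. move=> k Hk; apply: H; by right.
Qed.

Lemma jensen (I : Type) (r : list I) (w : I -> R) (x : I -> vec m) (v : I -> R) :
  (forall j, In j r -> 0 <= w j) -> (forall j, In j r -> th (x j) = Some (v j)) ->
  \big[Rplus/0]_(j <- r) w j = 1 ->
  exists c, th (fun i => \big[Rplus/0]_(j <- r) (w j * x j i)) = Some c /\
            c <= \big[Rplus/0]_(j <- r) (w j * v j).
Proof.
elim: r w => [|j r IH] w Hw Hx; rewrite ?big_nil ?big_cons; first lra.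
move=> Hs.
have Hw' : forall k, In k r -> 0 <= w k by move=> k Hk; apply: Hw; right.
have Hx' : forall k, In k r -> th (x k) = Some (v k) by move=> k Hk; apply: Hx; right.
have HW := sum_nonneg_seq Hw'. set W := \big[Rplus/0]_(j <- r) w j in HW Hs.
have Hwj := Hw j (or_introl erefl).
case: (Req_dec W 0) => HW0.
  have Hz := sum_zero_all Hw' HW0.
  exists (v j); split.
    rewrite -(Hx j (or_introl erefl)). congr th. apply: functional_extensionality => i. rewrite big_cons.
    move: (sum_zero_mul (fun k => x k i) Hz) => /= ->. have : w j = 1 by lra. move=> ->; ring.
  rewrite (sum_zero_mul v Hz). have : w j = 1 by lra. move=> ->; lra.
have HWp : 0 < W by lra.
have Hw2 : forall k, In k r -> 0 <= w k / W by move=> k Hk; rewrite /Rdiv; apply: Rmult_le_pos; [apply: Hw' | apply: Rlt_le; apply: Rinv_0_lt_compat]; done.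
have Hs2 : \big[Rplus/0]_(j <- r) (w j / W) = 1.
  rewrite /Rdiv -big_distrl /= -/W. field. lra.
case: (IH (fun k => w k / W) Hw2 Hx' Hs2) => c' [Hc' Hle'].
have Ht : 0 <= w j <= 1 by lra.
case: (hconv (Hx j (or_introl erefl)) Hc' Ht) => c [Hc Hcle].
exists c; split.
  rewrite -Hc. congr th. apply: functional_extensionality => i. rewrite big_cons.
  rewrite /vadd /vscale. have -> : 1 - w j = W by lra.
  rewrite big_distrr /=. congr Rplus. apply: eq_bigr => k _. field. lra.
have E : \big[Rplus/0]_(j <- r) (w j * v j) = W * \big[Rplus/0]_(k <- r) (w k / W * v k).
  rewrite big_distrr /=. apply: eq_bigr => k _. field. lra.
have E2 : 1 - w j = W by lra. rewrite E2 in Hcle. rewrite E.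
have : W * c' <= W * \big[Rplus/0]_(k <- r) (w k / W * v k) by apply: Rmult_le_compat_l; lra.
lra.
Qed.
End Jensen.


Section MF.
Variables (m : nat) (th : efun m) (zb : vec m) (a0 : R).
Variable pieces : list (list (vec m * R) * (vec m * R)).
Hypothesis hconv : convex_fun th.
Hypothesis hdom : forall x, edom th x <-> exists P, In P pieces /\ polyhedron (fst P) x.
Hypothesis haff : forall P x, In P pieces -> polyhedron (fst P) x ->
        th x = Some (dot (fst (snd P)) x + snd (snd P)).
Hypothesis hz : th zb = Some a0.

Let K := size pieces.
Let dflt : list (vec m * R) * (vec m * R) := (nil, (vzero, 0)).
Definition Pj (j : 'I_K) := seq.nth dflt pieces j.
Definition cP (j : 'I_K) : vec m := fst (snd (Pj j)).
Definition actb (j : 'I_K) : bool := if excluded_middle_informative (act zb (Pj j)) then true else false.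
Definition Aj (j : 'I_K) : list (vec m) :=
  map fst (filter (fun h => if Req_EM_T (dot (fst h) zb) (snd h) then true else false) (fst (Pj j))).

Lemma actbP j : actb j = true <-> act zb (Pj j).
Proof. rewrite /actb; case: excluded_middle_informative => //. Qed.

Lemma Pj_in j : In (Pj j) pieces.
Proof. apply: nth_In'. exact: ltn_ord. Qed.

Lemma Aj_Kc j d : (forall a, In a (Aj j) -> dot a d <= 0) -> Kc zb (Pj j) d.
Proof.
move=> H h Hh Heq. apply: H. apply/in_map_iff. exists h; split => //.
apply/filter_In; split => //. by case: Req_EM_T.
Qed.

Lemma Kc_Aj j d a : Kc zb (Pj j) d -> In a (Aj j) -> dot a d <= 0.
Proof.
move=> H /in_map_iff [h [<- /filter_In [Hh Heq]]]. apply: H => //. move: Heq. by case: Req_EM_T.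
Qed.

Lemma cone_nonpos (A : list (vec m)) u d : gcone A u -> (forall a, In a A -> dot a d <= 0) -> dot u d <= 0.
Proof.
move=> Hc H. have := @gcone_nonneg _ A u (fun i => - d i).
have Hy : forall g, In g A -> 0 <= gdot (fun i => - d i) g.
  move=> g Hg. rewrite gdot_oppl gdot_sym. have : gdot g d <= 0 := H g Hg. lra.
move=> /(_ Hy Hc). rewrite gdot_oppl gdot_sym. change (0 <= - gdot u d -> gdot u d <= 0). lra.
Qed.

Definition W := option ('I_K * 'I_m).

Section Gens.
Variables (n : vec m) (al : R).
Definition ev (i : 'I_m) : vec m := fun i' => if i' == i then 1 else 0.
Definition gcp (i : 'I_m) : W -> R := fun w => match w with None => n i | Some p => if p.2 == i then 1 else 0 end.
Definition gcm (i : 'I_m) : W -> R := fun w => - gcp i w.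
Definition gtau : W -> R := fun w => match w with None => - al | Some p => if actb p.1 then - cP p.1 p.2 else 0 end.
Definition glam (j : 'I_K) (a : vec m) : W -> R := fun w => match w with None => 0 | Some p => if p.1 == j then - a p.2 else 0 end.
Definition gfree (j : 'I_K) (i : 'I_m) (s : R) : W -> R :=
  fun w => match w with None => 0 | Some p => if (p.1 == j) && (p.2 == i) then s else 0 end.
Definition gens : list (W -> R) :=
  map gcp (enum 'I_m) ++ map gcm (enum 'I_m) ++ gtau ::
  flat_map (fun j => if actb j then map (glam j) (Aj j)
                     else flat_map (fun i => gfree j i 1 :: gfree j i (-1) :: nil) (enum 'I_m)) (enum 'I_K).
Definition tg : W -> R := fun w => match w with None => 1 | Some _ => 0 end.

Lemma in_enum (T : finType) (x : T) : In x (enum T).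
Proof. apply: in_In. by rewrite mem_enum. Qed.

Lemma in_gens g : In g gens ->
  (exists i, g = gcp i) \/ (exists i, g = gcm i) \/ g = gtau \/
  (exists j a, actb j = true /\ In a (Aj j) /\ g = glam j a) \/
  (exists j i s, actb j = false /\ g = gfree j i s).
Proof.
rewrite /gens => /in_app_iff [/in_map_iff [i [<- _]]|]; first by left; exists i.
move=> /in_app_iff [/in_map_iff [i [<- _]]|]; first by right; left; exists i.
case=> [<-|]; first by right; right; left.
move=> /in_flat_map [j [_]]. case E: (actb j).
  move=> /in_map_iff [a [<- Ha]]. right; right; right; left. by exists j, a.
move=> /in_flat_map [i [_ [<-|[<-|//]]]]; right; right; right; right; [by exists j, i, 1| by exists j, i, (-1)].
Qed.

Lemma gdotW (y g : W -> R) : gdot y g =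
  y None * g None + \big[Rplus/0]_(j < K) \big[Rplus/0]_(i < m) (y (Some (j, i)) * g (Some (j, i))).
Proof. rewrite /gdot sum_option. congr Rplus. rewrite pair_bigA /=. apply: eq_bigr => -[j i] _ //. Qed.

Lemma dot_ev (i : 'I_m) (x : vec m) : dot (ev i) x = x i.
Proof.
rewrite /dot (eq_bigr (fun k => if k == i then x k else 0)); first exact: sum_delta.
move=> k _; rewrite /ev; case: (k == i); ring.
Qed.

Definition Qinv (t : W -> R) := exists (c : vec m) (tau : R) (u : 'I_K -> vec m), 0 <= tau /\
  (forall j, actb j = true -> gcone (Aj j) (u j) /\ forall i, t (Some (j, i)) = c i - tau * cP j i - u j i) /\
  t None = dot c n - tau * al.

Lemma Qinv_cone t : gcone gens t -> Qinv t.
Proof.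
apply: gcone_ind.
- move=> t0 H0. exists vzero, 0, (fun _ => vzero). split; first lra. split.
    move=> j _; split; first exact: gcone0. move=> i; rewrite H0 /vzero; ring.
  rewrite H0 dot0l; ring.
- move=> t0 g mu Hg Hmu [c [tau [u [Htau [Hrows HN]]]]].
  case: (in_gens Hg) => [[i Eg]|[[i Eg]|[Eg|[[j0 [a [Hj0 [Ha Eg]]]]|[j0 [i0 [s [Hj0 Eg]]]]]]]]; subst g.
  + exists (vadd c (vscale mu (ev i))), tau, u. split => //. split.
      move=> j Hj. case: (Hrows j Hj) => Hc Hr. split => // i'. have := Hr i'.
      rewrite /= /vadd /vscale /ev. lra.
    move: HN. rewrite /= dot_addl dot_scalel dot_ev. lra.
  + exists (vadd c (vscale (- mu) (ev i))), tau, u. split => //. split.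
      move=> j Hj. case: (Hrows j Hj) => Hc Hr. split => // i'. have := Hr i'.
      rewrite /gcm /= /vadd /vscale /ev. lra.
    move: HN. rewrite /gcm /= dot_addl dot_scalel dot_ev. lra.
  + exists c, (tau + mu), u. split; first lra. split.
      move=> j Hj. case: (Hrows j Hj) => Hc Hr. split => // i'. have := Hr i'.
      rewrite /= Hj. lra.
    move: HN. rewrite /=. lra.
  + exists c, tau, (fun j => if j == j0 then vadd (u j) (vscale mu a) else u j). split => //. split.
      move=> j Hj. case: (Hrows j Hj) => Hc Hr. case E: (j == j0).
        move/eqP: E => E; subst j0. split; first exact: gcone_add.
        move=> i'. have := Hr i'. rewrite /= eqxx /vadd /vscale. lra.
      split => // i'. have := Hr i'. rewrite /= E. lra.
    move: HN. rewrite /=. lra.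
  + exists c, tau, u. split => //. split.
      move=> j Hj. case: (Hrows j Hj) => Hc Hr. split => // i'. have := Hr i'.
      have E : (j == j0) = false by apply/negP => /eqP E; subst j0; rewrite Hj in Hj0.
      rewrite /gfree /= E /=. lra.
    move: HN. rewrite /=. lra.
Qed.

Lemma in_gcp i : In (gcp i) gens.
Proof. apply/in_app_iff; left; apply/in_map_iff; exists i; split => //; exact: in_enum. Qed.
Lemma in_gcm i : In (gcm i) gens.
Proof. apply/in_app_iff; right; apply/in_app_iff; left; apply/in_map_iff; exists i; split => //; exact: in_enum. Qed.
Lemma in_gtau : In gtau gens.
Proof. apply/in_app_iff; right; apply/in_app_iff; right; by left. Qed.
Lemma in_glam j a : actb j = true -> In a (Aj j) -> In (glam j a) gens.
Proof.
move=> Hj Ha. apply/in_app_iff; right; apply/in_app_iff; right; right.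
apply/in_flat_map; exists j; split; first exact: in_enum. rewrite Hj. by apply/in_map_iff; exists a.
Qed.
Lemma in_gfree j i s : actb j = false -> (s = 1 \/ s = -1) -> In (gfree j i s) gens.
Proof.
move=> Hj Hs. apply/in_app_iff; right; apply/in_app_iff; right; right.
apply/in_flat_map; exists j; split; first exact: in_enum. rewrite Hj.
apply/in_flat_map; exists i; split; first exact: in_enum. case: Hs => ->; [by left|by right; left].
Qed.

End Gens.

Lemma inner_delta (j0 : 'I_K) (F : 'I_K -> 'I_m -> R) (G : 'I_m -> R) :
  \big[Rplus/0]_(j < K) \big[Rplus/0]_(i < m) (F j i * (if j == j0 then G i else 0)) =
  \big[Rplus/0]_(i < m) (F j0 i * G i).
Proof.
rewrite -(sum_delta j0 (fun j => \big[Rplus/0]_(i < m) (F j i * G i))).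
apply: eq_bigr => j _. case: (j == j0); first by [].
rewrite big1 // => i _; ring.
Qed.

Lemma dual_decomp n al (y : W -> R) : (forall g, In g (gens n al) -> 0 <= gdot y g) -> gdot y tg < 0 ->
  exists d : 'I_K -> vec m, (forall i, \big[Rplus/0]_(j < K) d j i = n i) /\
   (forall j, actb j = true -> Kc zb (Pj j) (d j)) /\ (forall j, actb j = false -> forall i, d j i = 0) /\
   \big[Rplus/0]_(j < K) (if actb j then dot (cP j) (d j) else 0) <= al.
Proof.
move=> Hy Htg.
have Hy0 : y None < 0.
  move: Htg. rewrite gdotW /= big1; [lra|] => j _. rewrite big1 // => i _; ring.
set nu := - y None. have Hnu : 0 < nu by rewrite /nu; lra.
set Y := fun j i => y (Some (j, i)).
exists (fun j => vscale (/ nu) (Y j)).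
have Hinv : 0 < / nu by apply: Rinv_0_lt_compat.
split.
  move=> i. have H1 := Hy _ (in_gcp n al i). have H2 := Hy _ (in_gcm n al i).
  rewrite /gcm gdot_oppr in H2.
  have E : gdot y (gcp n i) = y None * n i + \big[Rplus/0]_(j < K) Y j i.
    rewrite gdotW /=. congr Rplus. apply: eq_bigr => j _.
    rewrite (eq_bigr (fun i' => if i' == i then Y j i' else 0)); first exact: sum_delta.
    move=> i' _. rewrite /Y. case: (i' == i); ring.
  rewrite E in H1 H2. rewrite /vscale -big_distrr /=.
  have -> : \big[Rplus/0]_(j < K) Y j i = nu * n i by rewrite /nu; lra.
  field; lra.
split.
  move=> j Hj. apply: Aj_Kc => a Ha. have H := Hy _ (in_glam n al Hj Ha).
  rewrite gdotW /= inner_delta in H.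
  rewrite dot_scaler.
  have E : \big[Rplus/0]_(i < m) (y (Some (j, i)) * - a i) = -1 * dot a (Y j).
    rewrite /dot big_distrr /=; apply: eq_bigr => i _; rewrite /Y; ring.
  rewrite E in H. nra.
split.
  move=> j Hj i. have H1 := Hy _ (in_gfree n al i Hj (or_introl erefl)).
  have H2 := Hy _ (in_gfree n al i Hj (or_intror erefl)).
  have E : forall s, gdot y (gfree j i s) = Y j i * s.
    move=> s. rewrite gdotW /= Rmult_0_r Rplus_0_l.
    rewrite (eq_bigr (fun j' => \big[Rplus/0]_(i' < m) (Y j' i' * (if j' == j then (if i' == i then s else 0) else 0)))).
      rewrite inner_delta (eq_bigr (fun i' => if i' == i then Y j i' * s else 0)); first exact: sum_delta.
      move=> i' _. case: (i' == i); ring.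
    move=> j' _. apply: eq_bigr => i' _. rewrite /Y. by case: (j' == j); case: (i' == i).
  rewrite !E in H1 H2. rewrite /vscale. have : Y j i = 0 by lra. move=> ->; ring.
have H := Hy _ (in_gtau n al).
set S := \big[Rplus/0]_(j < K) (if actb j then dot (cP j) (Y j) else 0).
have E1 : \big[Rplus/0]_(j < K) (if actb j then dot (cP j) (vscale (/ nu) (Y j)) else 0) = / nu * S.
  rewrite /S big_distrr /=. apply: eq_bigr => j _. case: (actb j); [by rewrite dot_scaler|ring].
have E2 : \big[Rplus/0]_(j < K) \big[Rplus/0]_(i < m) (y (Some (j, i)) * (if actb j then - cP j i else 0)) = -1 * S.
  rewrite /S big_distrr /=. apply: eq_bigr => j _. case: (actb j).
    rewrite /dot big_distrr /=. apply: eq_bigr => i _. rewrite /Y; ring.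
  rewrite big1 => [|i _]; ring.
rewrite gdotW /= E2 in H. rewrite E1.
have : S <= nu * al by rewrite /nu; lra.
move=> HS. apply: (Rmult_le_reg_l nu) => //. rewrite -Rmult_assoc Rinv_r; lra.
Qed.

Lemma piece_idx P : In P pieces -> exists j : 'I_K, Pj j = P.
Proof.
move=> HP. case: (In_nth' dflt HP) => k [Hk E]. by exists (Ordinal Hk).
Qed.

Lemma primal_contra n vb : subdiff th zb vb -> gcone (gens n (dot vb n)) tg ->
  exists c, subdiff th zb c /\ dot vb n < dot c n.
Proof.
move=> Hvb Hc. case: (Qinv_cone Hc) => c [tau [u [Htau [Hrows HN]]]].
rewrite /tg in HN.
have Hcj : forall j, actb j = true -> forall d, Kc zb (Pj j) d ->
    dot c d = tau * dot (cP j) d + dot (u j) d /\ dot (u j) d <= 0.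
  move=> j Hj d HK. case: (Hrows j Hj) => Hcone Hr. split.
    rewrite -dot_scalel -dot_addl. apply: dot_ext => // i. have := Hr i. rewrite /tg /vadd /vscale /=. lra.
  exact: cone_nonpos Hcone (fun a Ha => Kc_Aj HK Ha).
case: (Rle_lt_dec tau 0) => Ht.
- have Ht0 : tau = 0 by lra. subst tau.
  exists (vadd vb c); split.
    apply: (crit hconv hdom haff hz) => P HP Hact d HK.
    case: (piece_idx HP) => j Ej. subst P.
    have Hj : actb j = true by apply/actbP.
    case: (Hcj j Hj d HK) => E1 E2.
    have := sub_prop haff hz Hvb HP Hact HK. rewrite dot_addl E1. rewrite /cP in E1 *. lra.
  rewrite dot_addl. lra.
- exists (vscale (/ tau) c); split.
    apply: (crit hconv hdom haff hz) => P HP Hact d HK.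
    case: (piece_idx HP) => j Ej. subst P.
    have Hj : actb j = true by apply/actbP.
    case: (Hcj j Hj d HK) => E1 E2.
    rewrite dot_scalel E1. rewrite /cP.
    have Hi : 0 < / tau by apply: Rinv_0_lt_compat.
    have -> : / tau * (tau * dot (fst (snd (Pj j))) d + dot (u j) d) =
              dot (fst (snd (Pj j))) d + / tau * dot (u j) d by field; lra.
    nra.
  rewrite dot_scalel. have -> : dot c n = 1 + tau * dot vb n by lra.
  have Hi : 0 < / tau by apply: Rinv_0_lt_compat.
  have -> : / tau * (1 + tau * dot vb n) = / tau + dot vb n by field; lra.
  lra.
Qed.

Lemma le_sum_term (T : finType) (F : T -> R) j : (forall i, 0 <= F i) -> F j <= \big[Rplus/0]_(i : T) F i.
Proof.
move=> H. rewrite (bigD1 j) //=.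
have : 0 <= \big[Rplus/0]_(i | i != j) F i.
  elim/big_ind: _ => [|x y Hx Hy|i _]; [lra|lra|exact: H].
lra.
Qed.

Lemma MF vb n : subdiff th zb vb -> (forall c, subdiff th zb c -> dot c n <= dot vb n) ->
  exists s0, 0 < s0 /\ forall s, 0 < s <= s0 ->
    exists val, th (vadd zb (vscale s n)) = Some val /\ val <= a0 + s * dot vb n.
Proof.
move=> Hvb Hmax. set al := dot vb n.
case: (classic (gcone (gens n al) tg)) => Hc.
  case: (primal_contra Hvb Hc) => c [Hc1 Hc2]. have := Hmax c Hc1. rewrite /al in Hc2. lra.
case: (farkas Hc) => y [Hy Hytg].
case: (dual_decomp Hy Hytg) => d [Hsum [HK [H0 Hal]]].
have HKpos : leq 1 K.
  have : edom th zb by exists a0.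
  case/hdom => P [HP _]. rewrite /K. case: (pieces) HP => //.
set Kr := INR K. have HKr : 0 < Kr by rewrite /Kr; apply: lt_0_INR; apply/ltP.
case: (local_struct zb pieces) => rho [Hr [_ H2]].
set D := \big[Rplus/0]_(j < K) dot (d j) (d j).
have HDj : forall j, dot (d j) (d j) <= D by move=> j; exact: (@le_sum_term _ (fun j0 => dot (d j0) (d j0)) j (fun i => dot_nonneg (d i))).
have HD : 0 <= Kr * Kr * D.
  have : 0 <= D by apply: Rle_trans (dot_nonneg (d (Ordinal HKpos))) (HDj _).
  move=> H; apply: Rmult_le_pos => //; nra.
case: (shrink HD Hr) => Hs0 [Hs1 Hs2]. set s0 := rho / (Kr * Kr * D + rho) in Hs0 Hs1 Hs2.
exists s0; split => // s [Hs Hss].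
have Hpt : forall j, th (vadd zb (vscale (Kr * s) (d j))) =
      Some (a0 + Kr * s * (if actb j then dot (cP j) (d j) else 0)).
  move=> j. case E: (actb j).
    have Hd : dot (vscale (Kr * s) (d j)) (vscale (Kr * s) (d j)) < rho.
      rewrite dot_scalel dot_scaler. have := HDj j. have := dot_nonneg (d j).
      have : s * s <= s0 * s0 by apply: Rmult_le_compat; lra.
      move=> Hss2 Hn HDj'. 
      have : Kr * s * (Kr * s * dot (d j) (d j)) <= s * s * (Kr * Kr * D).
        have -> : Kr * s * (Kr * s * dot (d j) (d j)) = s * s * (Kr * Kr * dot (d j) (d j)) by ring.
        apply: Rmult_le_compat_l; first nra. apply: Rmult_le_compat_l; nra.
      have : s * s * (Kr * Kr * D) <= s0 * s0 * (Kr * Kr * D) by apply: Rmult_le_compat_r.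
      lra.
    have Hact : act zb (Pj j) by apply/actbP.
    have Hpol := H2 _ _ Hd (Pj_in j) Hact (Kc_scale (Rlt_le _ _ (Rmult_lt_0_compat _ _ HKr Hs)) (HK j E)).
    rewrite (piece_value haff hz (Pj_in j) Hact Hpol) dot_scaler. by rewrite /cP.
  have -> : vadd zb (vscale (Kr * s) (d j)) = zb.
    apply: functional_extensionality => i. rewrite /vadd /vscale H0 //. ring.
  rewrite hz. congr Some. ring.
have Hw : forall j, In j (index_enum 'I_K) -> 0 <= / Kr.
  move=> j _. apply: Rlt_le. exact: Rinv_0_lt_compat.
have Hw1 : \big[Rplus/0]_(j <- index_enum 'I_K) / Kr = 1.
  change (\big[Rplus/0]_(j < K) / Kr = 1). rewrite sum_const_ord /Kr. field. rewrite -/Kr; lra.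
case: (@jensen _ th hconv _ (index_enum 'I_K) (fun _ => / Kr) (fun j => vadd zb (vscale (Kr * s) (d j))) (fun j => a0 + Kr * s * (if actb j then dot (cP j) (d j) else 0)) Hw (fun j _ => Hpt j) Hw1) => c [Hc1 Hc2].
exists c; split.
  rewrite -Hc1. congr th. apply: functional_extensionality => i.
  rewrite /vadd /vscale.
  change (zb i + s * n i = \big[Rplus/0]_(j < K) (/ Kr * (zb i + Kr * s * d j i))).
  rewrite (eq_bigr (fun j => / Kr * zb i + s * d j i)); last first.
    move=> j _. field. lra.
  rewrite big_split /= sum_const_ord -big_distrr /= Hsum. rewrite -/Kr. field. lra.
move: Hc2. change (c <= \big[Rplus/0]_(j < K) (/ Kr * (a0 + Kr * s * (if actb j then dot (cP j) (d j) else 0))) -> c <= a0 + s * al).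
rewrite (eq_bigr (fun j => / Kr * a0 + s * (if actb j then dot (cP j) (d j) else 0))); last first.
  move=> j _. field. lra.
rewrite big_split /= sum_const_ord -big_distrr /= -/Kr.
have -> : Kr * (/ Kr * a0) = a0 by field; lra.
move=> H. have : s * \big[Rplus/0]_(j < K) (if actb j then dot (cP j) (d j) else 0) <= s * al.
  apply: Rmult_le_compat_l; lra.
move=> H3. apply: (Rle_trans _ _ _ H). apply: Rplus_le_compat_l. exact: H3.
Qed.
End MF.


Section Trans.
Variables (m : nat) (th : efun m) (zb : vec m) (a0 : R).
Variable pieces : list (list (vec m * R) * (vec m * R)).
Hypothesis hconv : convex_fun th.
Hypothesis hdom : forall x, edom th x <-> exists P, In P pieces /\ polyhedron (fst P) x.
Hypothesis haff : forall P x, In P pieces -> polyhedron (fst P) x ->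
        th x = Some (dot (fst (snd P)) x + snd (snd P)).
Hypothesis hz : th zb = Some a0.

Lemma homog : exists rho, 0 < rho /\ forall e b, dot e e < rho -> th (vadd zb e) = Some b ->
  th (vadd zb (vscale 2 e)) = Some (2 * b - a0).
Proof.
case: (local_struct zb pieces) => rho [Hr [H1 H2]].
exists (rho / 4); split; first lra.
move=> e b He Hb.
have : edom th (vadd zb e) by exists b.
case/hdom => P [HP Hpol]. have He' : dot e e < rho by lra.
case: (H1 e P He' HP Hpol) => Ha HK.
have Hd : dot (vscale 2 e) (vscale 2 e) < rho by rewrite dot_scalel dot_scaler; lra.
have Hpol2 := H2 _ _ Hd HP Ha (Kc_scale (Rlt_le _ _ Rlt_0_2) HK).
rewrite (piece_value haff hz HP Ha Hpol2) dot_scaler.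
rewrite (piece_value haff hz HP Ha Hpol) in Hb. case: Hb => <-. congr Some; ring.
Qed.

Lemma translate vb n : subdiff th zb vb -> (forall c, subdiff th zb c -> dot c n = dot vb n) ->
  exists rho2 t0, 0 < rho2 /\ 0 < t0 /\ forall z v, dot (vsub z zb) (vsub z zb) < rho2 ->
     subdiff th z v -> forall t, Rabs t <= t0 -> subdiff th (vadd z (vscale t n)) v.
Proof.
move=> Hvb Heq.
case: (MF hconv hdom haff hz Hvb (n:=n)) => [c Hc|s1 [Hs1 HM1]]; first by rewrite (Heq c Hc); lra.
case: (MF hconv hdom haff hz Hvb (n:=vopp n)) => [c Hc|s2 [Hs2 HM2]].
  rewrite !dot_oppr (Heq c Hc); lra.
set al := dot vb n.
case: homog => rho [Hr Hh].
set t0 := Rmin s1 s2 / 2.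
have Ht0 : 0 < t0 by rewrite /t0; have := Rmin_pos _ _ Hs1 Hs2; lra.
have Hm1 := Rmin_l s1 s2. have Hm2 := Rmin_r s1 s2.
have B : forall t, Rabs t <= t0 -> exists val, th (vadd zb (vscale (2 * t) n)) = Some val /\ val <= a0 + 2 * t * al.
  move=> t Ht. case: (Rtotal_order t 0) => [Hneg|[H0|Hpos]].
  - rewrite Rabs_left in Ht => //.
    have Hs : 0 < - (2 * t) <= s2 by rewrite /t0 in Ht; lra.
    case: (HM2 _ Hs) => val [Hv Hle].
    exists val; split.
      rewrite -Hv; congr th; apply: functional_extensionality => i; rewrite /vadd /vscale /vopp; ring.
    rewrite dot_oppr -/al in Hle. lra.
  - subst t. exists a0; split; last lra. rewrite -hz; congr th.
    apply: functional_extensionality => i; rewrite /vadd /vscale; ring.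
  - rewrite Rabs_right in Ht; last lra.
    have Hs : 0 < 2 * t <= s1 by rewrite /t0 in Ht; lra.
    case: (HM1 _ Hs) => val [Hv Hle].
    by exists val.
exists (rho / 4), t0; split; first lra. split => //.
move=> z v Hz [b [Hb Hsub]].
have Hz' : dot (vsub z zb) (vsub z zb) < rho by lra.
have Hb' : th (vadd zb (vsub z zb)) = Some b by rewrite vadd_sub.
have H2e := Hh _ _ Hz' Hb'.
have Up : forall t, Rabs t <= t0 -> exists c, th (vadd z (vscale t n)) = Some c /\ c <= b + t * al.
  move=> t Ht. case: (B t Ht) => val [Hv Hle].
  have Hh1 : 0 <= /2 <= 1 by lra.
  case: (hconv H2e Hv Hh1) => c [Hc Hcle].
  exists c; split.
    rewrite -Hc; congr th; apply: functional_extensionality => i.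
    rewrite /vadd /vscale /vsub. field.
  lra.
have Hvn : dot v n = al.
  have Ht1 : Rabs t0 <= t0 by rewrite Rabs_right; lra.
  have Ht2 : Rabs (- t0) <= t0 by rewrite Rabs_Ropp Rabs_right; lra.
  case: (Up _ Ht1) => c1 [Hc1 Hle1]. case: (Up _ Ht2) => c2 [Hc2 Hle2].
  have E : forall t, dot v (vsub (vadd z (vscale t n)) z) = t * dot v n.
    move=> t. rewrite -dot_scaler. apply: dot_ext => // i. rewrite /vsub /vadd /vscale; ring.
  have := Hsub _ _ Hc1. have := Hsub _ _ Hc2. rewrite !E. nra.
move=> t Ht. case: (Up t Ht) => c [Hc Hle].
exists c; split => // x bx Hx.
have := Hsub x bx Hx.
have -> : dot v (vsub x (vadd z (vscale t n))) = dot v (vsub x z) - t * dot v n.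
  rewrite -dot_scaler -dot_subr. apply: dot_ext => // i. rewrite /vsub /vadd /vscale; ring.
rewrite Hvn. lra.
Qed.

End Trans.


Lemma pdot_nonneg m (p : vec m * vec m) : 0 <= pdot p p.
Proof. rewrite /pdot. have := dot_nonneg p.1. have := dot_nonneg p.2. lra. Qed.

Lemma pnorm_lt_sq m (p : vec m * vec m) r : pnorm p < sqrt r -> pdot p p < r.
Proof. exact: sqrt_lt_0_alt. Qed.

Lemma sq_lt_pnorm m (p : vec m * vec m) eps : 0 < eps -> pdot p p < eps * eps -> pnorm p < eps.
Proof.
move=> He H. rewrite -(sqrt_square eps); last lra. apply: sqrt_lt_1_alt. split => //. exact: pdot_nonneg.
Qed.

Lemma pnorm_sq m (p : vec m * vec m) : pnorm p * pnorm p = pdot p p.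
Proof. rewrite /pnorm sqrt_sqrt //. exact: pdot_nonneg. Qed.

Lemma Rabs_small0 x : (forall eps, 0 < eps -> Rabs x < eps) -> x = 0.
Proof.
move=> H. case: (Req_dec x 0) => // Hx. have Ha : 0 < Rabs x by apply: Rabs_pos_lt.
have := H _ Ha. lra.
Qed.

Lemma dot_zero_vec m (n : vec m) : dot n n = 0 -> forall i, n i = 0.
Proof. move=> H i. apply: NNPP => Hi. have := @gdot_pos _ n i Hi. have : gdot n n = 0 := H. lra. Qed.

Section Normal.
Variables (m : nat) (th : efun m) (zb : vec m) (a0 : R).
Variable pieces : list (list (vec m * R) * (vec m * R)).
Hypothesis hconv : convex_fun th.
Hypothesis hdom : forall x, edom th x <-> exists P, In P pieces /\ polyhedron (fst P) x.
Hypothesis haff : forall P x, In P pieces -> polyhedron (fst P) x ->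
        th x = Some (dot (fst (snd P)) x + snd (snd P)).
Hypothesis hz : th zb = Some a0.

Lemma psub_trans (z v n : vec m) t :
  forall p : vec m * vec m, pdot p (psub (vadd z (vscale t n), v) (z, v)) = t * dot p.1 n.
Proof.
move=> p. rewrite /pdot /psub /=.
rewrite (@dot_ext _ p.1 (vsub (vadd z (vscale t n)) z) p.1 (vscale t n)) //; last first.
  move=> i; rewrite /vsub /vadd /vscale; ring.
rewrite (@dot_ext _ p.2 (vsub v v) p.2 vzero) //; last first.
  move=> i; rewrite /vsub /vzero; ring.
rewrite dot_scaler dot0r. ring.
Qed.

Lemma pnorm_trans (z v n : vec m) t :
  pnorm (psub (vadd z (vscale t n), v) (z, v)) = Rabs t * sqrt (dot n n).
Proof.
rewrite /pnorm psub_trans /=.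
rewrite (@dot_ext _ (vsub (vadd z (vscale t n)) z) n (vscale t n) n) //; last first.
  move=> i; rewrite /vsub /vadd /vscale; ring.
rewrite dot_scalel -sqrt_Rsqr_abs -sqrt_mult_alt; last exact: Rle_0_sqr.
congr sqrt. rewrite /Rsqr; ring.
Qed.

Lemma normal_perp vb w q n : subdiff th zb vb -> (forall c, subdiff th zb c -> dot c n = dot vb n) ->
  lim_normal (gph (subdiff th)) (zb, vb) (w, q) -> dot w n = 0.
Proof.
move=> Hvb Heq [_ [xs [vs [Hxs [Hpx [Hreg Hpv]]]]]].
case: (translate hconv hdom haff hz Hvb Heq) => rho2 [t0 [Hr2 [Ht0 HT]]].
case: (Req_dec (dot n n) 0) => HN.
  have Hn := dot_zero_vec HN. rewrite (@dot_ext _ w n w vzero) // ?dot0r // => i; exact: Hn.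
have HNp : 0 < dot n n by have := dot_nonneg n; lra.
set nn := sqrt (dot n n). have Hnn : 0 < nn by apply: sqrt_lt_R0.
case: (Hpx (sqrt rho2) (sqrt_lt_R0 _ Hr2)) => N HN1.
have Hzero : forall k, leq N k -> dot (fst (vs k)) n = 0.
  move=> k Hk. have Hd := pnorm_lt_sq (HN1 k Hk).
  case E: (xs k) => [zk vk]. rewrite E /pdot /psub /= in Hd.
  have Hzk : dot (vsub zk zb) (vsub zk zb) < rho2 by have := dot_nonneg (vsub vk vb); lra.
  have Hg : subdiff th zk vk by have := Hxs k; rewrite E.
  case: (Hreg k) => _. rewrite E => Hr.
  have key : forall eps, 0 < eps -> forall t, 0 < Rabs t -> Rabs t <= t0 -> Rabs t * nn < eps ->
     False \/ True.
    by right.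
  have bound : forall eps, 0 < eps -> exists t, 0 < t /\ t <= t0 /\ t * nn < eps.
    move=> eps He. exists (Rmin t0 (eps / (2 * nn))). split.
      apply: Rmin_pos => //. apply: Rdiv_lt_0_compat; lra.
    split; first exact: Rmin_l.
    have := Rmin_r t0 (eps / (2 * nn)).
    have : eps / (2 * nn) * nn = eps / 2 by field; lra.
    nra.
  have Hside : forall s, (s = 1 \/ s = -1) -> forall eps, 0 < eps -> s * dot (fst (vs k)) n <= eps * nn.
    move=> s Hs eps He. case: (Hr eps He) => delta [Hdel Hx].
    case: (bound delta Hdel) => t [Htp [Htt Htn]].
    have Hat : Rabs (s * t) = t by case: Hs => ->; [rewrite Rmult_1_l Rabs_right; lra|rewrite Rabs_left; lra].
    have Hgph : gph (subdiff th) (vadd zk (vscale (s * t) n), vk).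
      apply: HT => //. by rewrite Hat.
    have := Hx _ Hgph. rewrite pnorm_trans psub_trans Hat -/nn.
    move=> H. have Hpos : 0 < t * nn by nra.
    have := H (conj Hpos Htn). move=> H2.
    have : t * (s * dot (vs k).1 n) <= t * (eps * nn) by lra.
    move=> H3. apply: (Rmult_le_reg_l t) => //.
  have H1 : dot (fst (vs k)) n <= 0.
    apply: Rnot_lt_le => Hlt.
    have := Hside 1 (or_introl erefl) (dot (vs k).1 n / (2 * nn)) ltac:(apply: Rdiv_lt_0_compat; lra).
    have : dot (vs k).1 n / (2 * nn) * nn = dot (vs k).1 n / 2 by field; lra.
    lra.
  have H2 : 0 <= dot (fst (vs k)) n.
    apply: Rnot_lt_le => Hlt.
    have := Hside (-1) (or_intror erefl) (- dot (vs k).1 n / (2 * nn)) ltac:(apply: Rdiv_lt_0_compat; lra).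
    have : - dot (vs k).1 n / (2 * nn) * nn = - dot (vs k).1 n / 2 by field; lra.
    lra.
  lra.
apply: Rabs_small0 => eps He.
case: (dot_small n He) => rho [Hr Hsm].
case: (Hpv (sqrt rho) (sqrt_lt_R0 _ Hr)) => N' HN'.
set k := maxn N N'.
have Hk1 : leq N k by apply: leq_maxl.
have Hk2 : leq N' k by apply: leq_maxr.
have Hd := pnorm_lt_sq (HN' k Hk2). rewrite /pdot /psub /= in Hd.
have Hd2 : dot (vsub (vs k).1 w) (vsub (vs k).1 w) < rho by have := dot_nonneg (vsub (vs k).2 q); lra.
have := Hsm _ Hd2. rewrite dot_subr (dot_sym n (vs k).1) (Hzero k Hk1) dot_sym.
by rewrite Rminus_0_l Rabs_Ropp.
Qed.
End Normal.


Definition Fv m (L : list (R * vec m)) : vec m := fold_right (fun p s => vadd (vscale (fst p) (snd p)) s) vzero L.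
Definition sL m (L : list (R * vec m)) : R := fold_right (fun p s => fst p + s) 0 L.

Lemma Fv_cons m (p : R * vec m) L i : Fv (p :: L) i = fst p * snd p i + Fv L i.
Proof. by []. Qed.
Lemma sL_cons m (p : R * vec m) L : sL (p :: L) = fst p + sL L.
Proof. by []. Qed.

Lemma div_nonneg a b : 0 <= a -> 0 < b -> 0 <= a / b.
Proof. move=> Ha Hb. rewrite /Rdiv. apply: Rmult_le_pos => //. apply: Rlt_le. exact: Rinv_0_lt_compat. Qed.

Section Final.
Variables (m : nat) (th : efun m) (zb : vec m).

Lemma forward_la vb w : subdiff th zb vb ->
  (forall n, (forall c, subdiff th zb c -> dot c n = dot vb n) -> dot w n = 0) -> S_sub th zb w.
Proof.
move=> Hvb perp.
set X := fun u : vec m => exists c1 c2, subdiff th zb c1 /\ subdiff th zb c2 /\ u = vsub c1 c2.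
case: (FD X) => D [HD HFD].
set G := D ++ map vopp D.
have HQ : gcone G w -> exists L : list (R * vec m), (forall p, In p L -> subdiff th zb (snd p)) /\
     sL L = 0 /\ forall i, w i = Fv L i.
  apply: (@gcone_ind _ (fun t => exists L : list (R * vec m), (forall p, In p L -> subdiff th zb (snd p)) /\
     sL L = 0 /\ forall i, t i = Fv L i)).
    move=> t Ht. exists nil; split => //; split => //.
  move=> t g mu /in_app_iff Hg Hmu [L [HL [HsL HFL]]].
  case: Hg => [Hg|/in_map_iff [d [Eg Hd]]].
    case: (HD g Hg) => c1 [c2 [Hc1 [Hc2 Eg]]]. subst g.
    exists ((mu, c1) :: (- mu, c2) :: L); split.
      move=> p [<-|[<-|Hp]] //; exact: HL.
    split; first by rewrite /sL /= -/(sL L) HsL; ring.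
    move=> i. have := HFL i. rewrite /Fv /= -/(Fv L) /vadd /vscale /vsub. lra.
  case: (HD d Hd) => c1 [c2 [Hc1 [Hc2 Ed]]]. subst g d.
  exists ((- mu, c1) :: (mu, c2) :: L); split.
    move=> p [<-|[<-|Hp]] //; exact: HL.
  split; first by rewrite /sL /= -/(sL L) HsL; ring.
  move=> i. have := HFL i. rewrite /Fv /= -/(Fv L) /vadd /vscale /vsub /vopp. lra.
have Hc : gcone G w.
  apply: NNPP => Hnc. case: (@farkas _ _ _ Hnc) => y [Hy Hyw].
  have HyD : forall d, In d D -> dot y d = 0.
    move=> d Hd. have H1 := Hy d (in_or_app _ _ _ (or_introl Hd)).
    have H2 := Hy (vopp d) (in_or_app _ _ _ (or_intror (in_map _ _ _ Hd))).
    have : gdot y (vopp d) = - gdot y d := gdot_oppr d y.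
    have : gdot y d = dot y d by []. lra.
  have Hperp : forall c, subdiff th zb c -> dot c y = dot vb y.
    move=> c Hcc. have := HFD y HyD (vsub c vb).
    have HX : X (vsub c vb) by exists c, vb.
    move=> /(_ HX). rewrite dot_subr (dot_sym y c) (dot_sym y vb). lra.
  have := perp y Hperp. have : gdot y w = dot w y by rewrite dot_sym. lra.
case: (HQ Hc) => L [HL [HsL HFL]].
exists (Fv ((1, vb) :: L)), (Fv ((1, vb) :: nil)); split; last split.
- exists ((1, vb) :: L); split; first by move=> p [<-|Hp] //; exact: HL.
  split => //. rewrite /= -/(sL L) HsL; ring.
- exists ((1, vb) :: nil); split; first by move=> p [<-|Hp].
  split => //=. ring.
- apply: functional_extensionality => i. rewrite HFL /vsub /Fv /= /vadd /vscale /vzero. ring.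
Qed.

Lemma Cconv c1 c2 t : subdiff th zb c1 -> subdiff th zb c2 -> 0 <= t <= 1 ->
  subdiff th zb (vadd (vscale t c1) (vscale (1 - t) c2)).
Proof.
move=> [a [Ha H1]] [a' [Ha' H2]] Ht. rewrite Ha in Ha'. case: Ha' => Ha'. subst a'.
exists a; split => // x b Hx. have := H1 x b Hx. have := H2 x b Hx.
rewrite dot_addl !dot_scalel. nra.
Qed.

Lemma mono z v z' v' : subdiff th z v -> subdiff th z' v' -> 0 <= dot (vsub v v') (vsub z z').
Proof.
move=> [b [Hb H1]] [b' [Hb' H2]]. have := H1 _ _ Hb'. have := H2 _ _ Hb.
rewrite dot_subl !dot_subr. lra.
Qed.

Lemma decomp vb L : subdiff th zb vb -> (forall p, In p L -> subdiff th zb (snd p)) ->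
  exists P N p q, 0 <= P /\ 0 <= N /\ subdiff th zb p /\ subdiff th zb q /\ sL L = P - N /\
     forall i, Fv L i = P * p i - N * q i.
Proof.
move=> Hvb. elim: L => [|[mu x] L IH] HL.
  exists 0, 0, vb, vb; do 4 (split; first by lra || done). split; first by rewrite /=; ring.
  move=> i; rewrite /= /vzero; ring.
have Hx : subdiff th zb x by apply: (HL (mu, x)); left.
case: IH => [p0 Hp0|P [N [p [q [HP [HN [Hp [Hq [Hs HF]]]]]]]]]; first by apply: HL; right.
case: (Rle_lt_dec 0 mu) => Hmu.
- case: (Req_dec (P + mu) 0) => HPm.
    have HP0 : P = 0 by lra. have Hm0 : mu = 0 by lra. subst P mu.
    exists 0, N, p, q; do 4 (split => //). split; first by rewrite sL_cons Hs /=; ring.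
    move=> i; rewrite Fv_cons HF /=; ring.
  set P' := P + mu. have HP' : 0 < P' by rewrite /P'; lra.
  have Ht : 0 <= P / P' <= 1.
    split; first by apply: div_nonneg.
    apply: (Rmult_le_reg_r P') => //. rewrite /Rdiv Rmult_assoc Rinv_l; [rewrite ?/P' ?/N'; lra|lra].
  exists P', N, (vadd (vscale (P / P') p) (vscale (1 - P / P') x)), q.
  split; first lra. split => //. split; first exact: Cconv. split => //.
  split; first by rewrite sL_cons Hs /= /P'; ring.
  move=> i. rewrite Fv_cons HF /= /vadd /vscale /P'. field. lra.
- set N' := N - mu. have HN' : 0 < N' by rewrite /N'; lra.
  have Ht : 0 <= N / N' <= 1.
    split; first by apply: div_nonneg.
    apply: (Rmult_le_reg_r N') => //. rewrite /Rdiv Rmult_assoc Rinv_l; [rewrite ?/P' ?/N'; lra|lra].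
  exists P, N', p, (vadd (vscale (N / N') q) (vscale (1 - N / N') x)).
  split => //. split; first lra. split => //. split; first exact: Cconv.
  split; first by rewrite sL_cons Hs /= /N'; ring.
  move=> i. rewrite Fv_cons HF /= /vadd /vscale /N'. field. lra.
Qed.

Lemma Fv_app (L1 L2 : list (R * vec m)) i : Fv (L1 ++ L2) i = Fv L1 i + Fv L2 i.
Proof.
elim: L1 => [|p L1 IH]; first by change (Fv L2 i = 0 + Fv L2 i); ring.
change (Fv (p :: (L1 ++ L2)) i = Fv (p :: L1) i + Fv L2 i). rewrite !Fv_cons IH; ring.
Qed.
Lemma sL_app (L1 L2 : list (R * vec m)) : sL (L1 ++ L2) = sL L1 + sL L2.
Proof.
elim: L1 => [|p L1 IH]; first by change (sL L2 = 0 + sL L2); ring.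
change (sL (p :: (L1 ++ L2)) = sL (p :: L1) + sL L2). rewrite !sL_cons IH; ring.
Qed.
Lemma Fv_neg (L : list (R * vec m)) i : Fv (map (fun p => (- fst p, snd p)) L) i = - Fv L i.
Proof.
elim: L => [|p L IH]; first by change (0 = - 0); ring.
change (Fv ((- fst p, snd p) :: map (fun p => (- fst p, snd p)) L) i = - Fv (p :: L) i).
rewrite !Fv_cons IH /=; ring.
Qed.
Lemma sL_neg (L : list (R * vec m)) : sL (map (fun p => (- fst p, snd p)) L) = - sL L.
Proof.
elim: L => [|p L IH]; first by change (0 = - 0); ring.
change (sL ((- fst p, snd p) :: map (fun p => (- fst p, snd p)) L) = - sL (p :: L)).
rewrite !sL_cons IH /=; ring.
Qed.

Lemma backward vb w : subdiff th zb vb -> S_sub th zb w ->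
  lim_normal (gph (subdiff th)) (zb, vb) (w, vopp vzero).
Proof.
move=> Hvb [a [b [[La [HLa [HsLa Ea]]] [[Lb [HLb [HsLb Eb]]] Ew]]]].
set L := La ++ map (fun p => (- fst p, snd p)) Lb.
have HL : forall p, In p L -> subdiff th zb (snd p).
  move=> p /in_app_iff [Hp|/in_map_iff [p' [<- Hp']]]; [exact: (HLa p Hp)|exact: (HLb p' Hp')].
have HsL : sL L = 0.
  rewrite /L sL_app sL_neg. change (sL La = 1) in HsLa. change (sL Lb = 1) in HsLb. lra.
have HFL : forall i, w i = Fv L i.
  move=> i. rewrite /L Fv_app Fv_neg Ew Ea Eb. by [].
case: (decomp Hvb HL) => P [N [p [q [HP [HN [Hp [Hq [Hs HF]]]]]]]].
have HPN : P = N by lra. subst N.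
have Hw : forall i, w i = P * (p i - q i) by move=> i; rewrite HFL HF; ring.
set r := fun k : nat => / (INR k + 1).
have Hr : forall k, 0 < r k <= 1.
  move=> k. have := pos_INR k. move=> Hk. split; first by apply: Rinv_0_lt_compat; lra.
  rewrite /r -Rinv_1. apply: Rinv_le_contravar; lra.
set vk := fun k => vadd (vscale (1 - r k) vb) (vscale (1 - (1 - r k)) q).
set ck := fun k => vadd (vscale (1 - r k) vb) (vscale (1 - (1 - r k)) p).
have Hvk : forall k, subdiff th zb (vk k).
  move=> k. apply: Cconv => //. have := Hr k. lra.
have Hck : forall k, subdiff th zb (ck k).
  move=> k. apply: Cconv => //. have := Hr k. lra.
split => //.
exists (fun k => (zb, vk k)), (fun _ => (w, vopp vzero)).
split; first by move=> k; exact: Hvk.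
split.
  move=> eps He. set Dq := dot (vsub q vb) (vsub q vb). have HDq : 0 <= Dq := dot_nonneg _.
  have He2 : 0 < eps * eps / (Dq + 1) by apply: Rdiv_lt_0_compat; nra.
  case: (archimed_cor1 _ He2) => N0 [HN0 HN0p].
  exists N0 => k Hk. apply: sq_lt_pnorm => //.
  rewrite /pdot /psub /=.
  rewrite (@dot_ext _ (vsub zb zb) (vsub zb zb) vzero vzero); try by move=> i; rewrite /vsub /vzero; ring.
  rewrite dot0r.
  rewrite (@dot_ext _ (vsub (vk k) vb) (vsub (vk k) vb) (vscale (r k) (vsub q vb)) (vscale (r k) (vsub q vb)));
    try by move=> i; rewrite /vsub /vk /vadd /vscale; ring.
  rewrite dot_scalel dot_scaler -/Dq.
  have HkN : INR N0 <= INR k by apply: le_INR; apply/leP.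
  have HN0pos : 0 < INR N0 by apply: lt_0_INR.
  have Hrk : r k <= / INR N0 by rewrite /r; apply: Rinv_le_contravar; lra.
  have := Hr k. move=> [Hr1 Hr2].
  have H1 : r k * (r k * Dq) <= r k * Dq.
    have H0 : 0 <= r k * Dq by apply: Rmult_le_pos; lra.
    have := Rmult_le_compat_r _ _ _ H0 Hr2. lra.
  have H2 : r k * Dq <= / INR N0 * Dq by nra.
  have H3 : / INR N0 * Dq <= / INR N0 * (Dq + 1) by have := Rinv_0_lt_compat _ HN0pos; nra.
  have H4 : / INR N0 * (Dq + 1) < eps * eps.
    have : eps * eps / (Dq + 1) * (Dq + 1) = eps * eps by field; lra.
    nra.
  lra.
split.
  move=> k. split; first exact: Hvk.
  move=> eps He. set kap := (INR k + 1) * P.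
  have Hkap : 0 <= kap by rewrite /kap; have := pos_INR k; nra.
  exists (eps / (kap + 1)); split; first by apply: Rdiv_lt_0_compat; lra.
  move=> [z v] Hzv [Hpn1 Hpn2].
  rewrite /pdot /psub /=.
  rewrite (@dot_ext _ (vopp vzero) (vsub v (vk k)) vzero (vsub v (vk k))); try by move=> i; rewrite /vopp /vzero; ring.
  rewrite dot0l Rplus_0_r.
  set pn := pnorm (psub (z, v) (zb, vk k)) in Hpn1 Hpn2 *.
  have Hpn : pn * pn = dot (vsub z zb) (vsub z zb) + dot (vsub v (vk k)) (vsub v (vk k)).
    by rewrite /pn pnorm_sq.
  have Hm := mono Hzv (Hck k).
  change (0 <= dot (vsub v (ck k)) (vsub z zb)) in Hm.
  set E := vsub z zb in Hpn Hm *.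
  have Ew1 : dot w E = P * dot (vsub p q) E.
    rewrite -dot_scalel. apply: dot_ext => //.
  have Em : dot (vsub v (ck k)) E = dot (vsub v (vk k)) E - r k * dot (vsub p q) E.
    rewrite -dot_scalel -dot_subl. apply: dot_ext => // i. rewrite /vsub /ck /vk /vadd /vscale; ring.
  have Ham := dot_amgm (vsub v (vk k)) E.
  rewrite (dot_sym (vsub v (vk k)) E) in Em.
  have Hrk := Hr k. case: Hrk => Hr1 Hr2.
  have Hinv : (INR k + 1) * r k = 1 by rewrite /r; field; have := pos_INR k; lra.
  have K1 : dot (vsub p q) E <= (INR k + 1) * dot E (vsub v (vk k)).
    have : r k * dot (vsub p q) E <= dot E (vsub v (vk k)) by lra.
    have Hk1 : 0 < INR k + 1 by have := pos_INR k; lra.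
    move=> H. have := Rmult_le_compat_l _ _ _ (Rlt_le _ _ Hk1) H.
    rewrite -Rmult_assoc Hinv Rmult_1_l. done.
  have K2 : dot w E <= kap * (pn * pn).
    rewrite Ew1 /kap. rewrite Hpn.
    have : P * dot (vsub p q) E <= P * ((INR k + 1) * dot E (vsub v (vk k))) by apply: Rmult_le_compat_l.
    have : 2 * dot E (vsub v (vk k)) <= dot E E + dot (vsub v (vk k)) (vsub v (vk k)).
      rewrite dot_sym; lra.
    have Hk1 : 0 <= INR k + 1 by have := pos_INR k; lra.
    have := dot_nonneg E. have := dot_nonneg (vsub v (vk k)).
    move=> h1 h2 h3 h4. 
    have : P * ((INR k + 1) * dot E (vsub v (vk k))) <= (INR k + 1) * P * (dot E E + dot (vsub v (vk k)) (vsub v (vk k))).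
      have Hkp : 0 <= (INR k + 1) * P by nra.
      have : dot E (vsub v (vk k)) <= dot E E + dot (vsub v (vk k)) (vsub v (vk k)) by lra.
      move=> h5. have := Rmult_le_compat_l _ _ _ Hkp h5. nra.
    lra.
  have K3 : kap * (pn * pn) <= eps * pn.
    have Hd : kap * pn <= eps.
      have : kap * pn <= kap * (eps / (kap + 1)) by apply: Rmult_le_compat_l => //; lra.
      have : kap * (eps / (kap + 1)) <= eps.
        have : kap * (eps / (kap + 1)) = eps - eps / (kap + 1) by field; lra.
        have : 0 < eps / (kap + 1) by apply: Rdiv_lt_0_compat; lra.
        lra.
      lra.
    have : kap * (pn * pn) = (kap * pn) * pn by ring.
    move=> ->. apply: Rmult_le_compat_r; lra.
  lra.
move=> eps He. exists O => k _. apply: sq_lt_pnorm => //.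
rewrite /pdot /psub /=.
rewrite (@dot_ext _ (vsub w w) (vsub w w) vzero vzero); try by move=> i; rewrite /vsub /vzero; ring.
rewrite (@dot_ext _ (vsub (vopp vzero) (vopp vzero)) (vsub (vopp vzero) (vopp vzero)) vzero vzero);
  try by move=> i; rewrite /vsub /vopp /vzero; ring.
rewrite !dot0r. nra.
Qed.

End Final.

Unset Implicit Arguments.

Theorem mainTheorem6 (m : nat) (th : efun m) (zb : vec m) :
  piecewise_linear th ->
  (exists v, subdiff th zb v) ->
  forall vb, subdiff th zb vb ->
    forall w, subdiff2 th zb vb vzero w <-> S_sub th zb w.
Proof.
move=> [hconv [_ [pieces [hdom haff]]]] _ vb Hvb w.
have [a0 hz] : exists a0, th zb = Some a0 by case: Hvb => a [Ha _]; exists a.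
split.
- move=> H. apply: (forward_la Hvb) => n Hn. exact: (normal_perp hconv hdom haff hz Hvb Hn H).
- move=> H. exact: backward Hvb H.
Qed.
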